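(* Let $\Pi_u(0)\subseteq\cdots\subseteq\Pi_u(t-1)$ and $\Pi_v(0)\subseteq\cdots\subseteq\Pi_v(t-1)$ be fixed subspaces of $\mathbb{F}_q^n$ such that $\Pi_u(i)\not\subseteq\Pi_v(j)$ and $\Pi_v(j)\not\subseteq\Pi_u(i)$ for all $i,j\in\{0,\dots,t-1\}$. For $i=1,\dots,t$ let $\pi_a(i)$ be the span of $k_a(i)$ vectors chosen uniformly at random from $\Pi_u(i-1)$ and $\pi_b(i)$ the span of $k_b(i)$ vectors chosen uniformly at random from $\Pi_v(i-1)$, all draws mutually independent, where the $k_a(i),k_b(i)\ge0$ are fixed integers with $k_a(1)\ge1$ and $k_b(1)\ge1$. Put $\Pi_a(i)=\sum_{j=1}^i\pi_a(j)$ and $\Pi_b(i)=\sum_{j=1}^i\pi_b(j)$. Then with probability $1-O(q^{-1})$, \[ \Pi_a(i)\not\subseteq\Pi_b(j)\quad\text{and}\quad\Pi_b(j)\not\subseteq\Pi_a(i)\qquad\text{for all } i,j\in\{1,\dots,t\}. \]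
   Context: $O(\cdot)$ refers to $q\to\infty$ with $n,t$ and all dimensions and numbers $k_a(i),k_b(i)$ fixed. *)

(* Defs.v *)
From HB Require Import structures.
From mathcomp Require Import all_boot all_order all_algebra.
Set Implicit Arguments. Unset Strict Implicit. Unset Printing Implicit Defensive.
Import GRing.Theory.
Local Open Scope ring_scope.

(* Index type of the random vectors attached to levels 0..t-1 (0-based; level
   j corresponds to the paper's index j+1): k j vectors at level j. *)
Definition ridx (t : nat) (k : nat -> nat) : finType := {j : 'I_t & 'I_(k j)}.

Definition draw (F : finFieldType) (n t : nat) (k : nat -> nat) : finType :=
  {ffun ridx t k -> 'rV[F]_n}.

(* Span of the vectors drawn at levels < i (paper: Pi(i) = sum_{j=1}^i pi(j)). *)
Definition span_upto (F : finFieldType) (n t : nat) (k : nat -> nat)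
    (X : draw F n t k) (i : nat) : {vspace 'rV[F]_n} :=
  <<[seq X s | s in [pred s : ridx t k | (tag s < i)%N]]>>%VS.

(* Admissible draws: each vector at level j lies in P j
   (paper: pi(j+1) drawn from Pi_u(j)). Uniform probability on this set
   = independent uniform choices of every vector in its subspace. *)
Definition admissible (F : finFieldType) (n t : nat) (k : nat -> nat)
    (P : nat -> {vspace 'rV[F]_n}) : {set draw F n t k} :=
  [set X : draw F n t k | [forall s : ridx t k, X s \in P (tag s)]].

Definition sample (F : finFieldType) (n t : nat) (ka kb : nat -> nat)
    (Pu Pv : nat -> {vspace 'rV[F]_n}) : {set draw F n t ka * draw F n t kb} :=
  setX (admissible t ka Pu) (admissible t kb Pv).

Definition bad_event (F : finFieldType) (n t : nat) (ka kb : nat -> nat)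
    : {set draw F n t ka * draw F n t kb} :=
  [set XY : draw F n t ka * draw F n t kb |
     [exists i : 'I_t, exists j : 'I_t,
        (span_upto XY.1 i.+1 <= span_upto XY.2 j.+1)%VS
        || (span_upto XY.2 j.+1 <= span_upto XY.1 i.+1)%VS]].

(* Main.v *)
Require Import Defs.
From HB Require Import structures.
From mathcomp Require Import all_boot all_order all_algebra.
Set Implicit Arguments. Unset Strict Implicit. Unset Printing Implicit Defensive.
Import GRing.Theory.
Local Open Scope ring_scope.

Lemma count_lemma (F : finFieldType) n t k (P : nat -> {vspace 'rV[F]_n})
  (s0 : ridx t k) (W : {vspace 'rV[F]_n}) :
  ~~ (P (tag s0) <= W)%VS ->
  (#|[set X in admissible t k P | X s0 \in W]| * #|F| <= #|admissible t k P|)%N.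
Proof.
move=> nPW.
have [v /andP [vP vW]] : exists v, (v \in P (tag s0)) && (v \notin W).
  case: (boolP [exists v, (v \in P (tag s0)) && (v \notin W)]).
    by move/existsP.
  move/existsPn=> H; exfalso; move/negP: nPW; apply; apply/subvP=> x xP.
  by move: (H x); rewrite xP /= negbK.
pose f (p : draw F n t k * F) : draw F n t k :=
  [ffun s => if s == s0 then p.1 s + p.2 *: v else p.1 s].
have -> : (#|[set X in admissible t k P | X s0 \in W]| * #|F|)%N =
  #|setX [set X in admissible t k P | X s0 \in W] [set: F]|.
  by rewrite cardsX cardsT.
rewrite -(card_in_imset (f := f)).
  apply: subset_leq_card; apply/subsetP=> Y /imsetP [[X c]].
  rewrite inE /= in_setT andbT inE => /andP [XA _] ->.
  move: XA; rewrite !inE => /forallP XA; apply/forallP=> s.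
  rewrite ffunE; case: eqP=> [->|_] //=.
  by rewrite memvD ?XA ?memvZ.
move=> [X c] [X' c']; rewrite !inE /= => /andP [/andP [_ XW] _] /andP [/andP [_ XW'] _] E.
have E0 := congr1 (fun g : draw F n t k => g s0) E.
rewrite /= !ffunE eqxx /= in E0.
have cc : c = c'.
  apply/eqP; apply/negPn/negP=> ne.
  have : (c - c') *: v \in W.
    have -> : (c - c') *: v = X' s0 - X s0.
      rewrite scalerBl -[X' s0](addrK (c' *: v)) -E0.
      by rewrite -!addrA addrC -!addrA addNr addr0.
    by rewrite memvB.
  move=> /(memvZ ((c - c')^-1)); rewrite scalerK ?subr_eq0 // => vW'.
  by rewrite vW' in vW.
subst c'; congr pair; apply/ffunP=> s.
have Es := congr1 (fun g : draw F n t k => g s) E.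
rewrite /= !ffunE in Es; case: eqP Es=> [-> /addIr|] //.
Qed.

Lemma span_in (F : finFieldType) n t k (X : draw F n t k) (i : nat) (s : ridx t k) :
  (tag s < i)%N -> X s \in span_upto X i.
Proof.
move=> si; apply: memv_span; apply: image_f; by [].
Qed.

Lemma span_sub (F : finFieldType) n t k (P : nat -> {vspace 'rV[F]_n}) (X : draw F n t k) j :
  (forall i j : nat, (i <= j < t)%N -> (P i <= P j)%VS) -> (j < t)%N ->
  X \in admissible t k P -> (span_upto X j.+1 <= P j)%VS.
Proof.
move=> mono jt; rewrite inE => /forallP XA; apply/span_subvP=> y /imageP [s sj ->].
have sj' : (tag s <= j)%N by [].
by apply: subvP (XA s); apply: mono; rewrite sj' jt.
Qed.

Theorem corollary4 (n t : nat) (ka kb : nat -> nat)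
    (hka : (0 < ka 0)%N) (hkb : (0 < kb 0)%N) :
  exists C : nat,
    forall (F : finFieldType) (Pu Pv : nat -> {vspace 'rV[F]_n}),
      (forall i j : nat, (i <= j < t)%N -> (Pu i <= Pu j)%VS) ->
      (forall i j : nat, (i <= j < t)%N -> (Pv i <= Pv j)%VS) ->
      (forall i j : nat, (i < t)%N -> (j < t)%N ->
          ~~ (Pu i <= Pv j)%VS /\ ~~ (Pv j <= Pu i)%VS) ->
      (#|sample t ka kb Pu Pv :&: bad_event F n t ka kb| * #|F|
         <= C * #|sample t ka kb Pu Pv|)%N.
Proof.
exists 2%N => F Pu Pv mu mv hne.
case: t mu mv hne => [|t] mu mv hne.
  have -> : (sample 0 ka kb Pu Pv :&: bad_event F n 0 ka kb) = set0.
    apply/setP=> XY; rewrite !inE; apply/negbTE; rewrite negb_and; apply/orP; right.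
    by apply/existsPn=> -[].
  by rewrite cards0.
pose sa : ridx t.+1 ka := Tagged (fun j : 'I_t.+1 => 'I_(ka j)) (Ordinal hka : 'I_(ka (@ord0 t))).
pose sb : ridx t.+1 kb := Tagged (fun j : 'I_t.+1 => 'I_(kb j)) (Ordinal hkb : 'I_(kb (@ord0 t))).
set A := admissible t.+1 ka Pu; set B := admissible t.+1 kb Pv.
set AW := [set X in A | X sa \in Pv t].
set BW := [set X in B | X sb \in Pu t].
have [nA _] := hne 0%N t (ltn0Sn _) (ltnSn _).
have [_ nB] := hne t 0%N (ltnSn _) (ltn0Sn _).
have hA : (#|AW| * #|F| <= #|A|)%N by apply: count_lemma.
have hB : (#|BW| * #|F| <= #|B|)%N by apply: count_lemma.
have sub : sample t.+1 ka kb Pu Pv :&: bad_event F n t.+1 ka kb \subset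
    setX AW B :|: setX A BW.
  apply/subsetP=> [[X Y]]; rewrite !inE /= => /andP [/andP [XA YB]].
  have XA' : X \in admissible t.+1 ka Pu by rewrite inE.
  have YB' : Y \in admissible t.+1 kb Pv by rewrite inE.
  move=> /existsP [i /existsP [j /orP [H|H]]].
  - rewrite XA YB /= andbT; apply/orP; left.
    apply: (subvP (mv j t _)); first by rewrite -ltnS ltn_ord /=.
    apply: (subvP (span_sub mv (ltn_ord j) YB')); apply: (subvP H).
    by apply: span_in.
  - rewrite XA YB /= andbT; apply/orP; right.
    apply: (subvP (mu i t _)); first by rewrite -ltnS ltn_ord /=.
    apply: (subvP (span_sub mu (ltn_ord i) XA')); apply: (subvP H).
    by apply: span_in.
apply: leq_trans (leq_mul (subset_leq_card sub) (leqnn _)) _.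
apply: leq_trans (leq_mul (leq_card_setU _ _) (leqnn _)) _.
rewrite /sample -/A -/B !cardsX mulnDl mul2n -addnn.
apply: leq_add.
  by rewrite mulnAC leq_mul2r hA orbT.
by rewrite -mulnA leq_mul2l hB orbT.
Qed.
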